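(* Let $\Omega>0$ denote the maximum absolute value of the stored quantities, let $C$ be the column index of a scalar (stored in $X[1,C]$) in $X\in\mathbb{R}^{K\times d}$, and let $D$ be the column index of a column. Then there exists a single transformer layer that simulates the repeat-addition operation $X[:,D]\leftarrow\mathbf 1_K\cdot X[1,C]+X[:,D]$.
   Context: Conventions: rows/columns indexed from $1$; $X[i,j]$ is the $(i,j)$ entry, $X[:,j]$ the $j$-th column; $\mathbf 1_K$ is the all-ones vector of length $K$. $\phi(x)=\max\{x,0\}$ entrywise. Hardmax $\sigma$: row $i$ of $\sigma(\Phi)$ is $\frac{1}{|S_i|}\sum_{k\in S_i}e_k$, $S_i=\{k:\Phi_{ik}=\max_j\Phi_{ij}\}$. Positional encoding: $\widehat\delta>0$ the nearest representable approximation of the minimum increment angle, $R_{\widehat\delta}=\begin{bmatrix}\cos\widehat\delta&-\sin\widehat\delta\\ \sin\widehat\delta&\cos\widehat\delta\end{bmatrix}$, $p_0=(0,1)^\top$, $p_i=R_{\widehat\delta}^\top p_{i-1}$. For a weighted hypergraph with incident matrix $A\in\mathbb{R}^{n_v\times n_e}$ ($A_{ij}=w(e_j)$ if vertex $v_i\in e_j$, else $0$) and $K\ge\max\{n_v,n_e\}+1$, the padded incident matrix $\widetilde A\in\mathbb{R}^{K\times K}$ has $\widetilde A_{i+1,j+1}=A_{ij}$, zeros elsewhere. A transformer layer on $X\in\mathbb{R}^{K\times d}$ is $f(X,\widetilde A)=f_{\mathrm{mlp}}(f_{\mathrm{attn}}(X,\widetilde A))$, $f_{\mathrm{attn}}(X,\widetilde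 A)=\sum_{i\in M_A}\psi^{(i)}(X,\widetilde A)+\sum_{i\in M_{A^\top}}\psi^{(i)}(X,\widetilde A^\top)+\sum_{i\in M}\psi^{(i)}(X,I_K)+X$, $\psi(X,B)=B\,\sigma(XW_QW_K^\top X^\top)XW_V$ ($W_Q,W_K\in\mathbb{R}^{d\times2}$, $W_V\in\mathbb{R}^{d\times d}$), $f_{\mathrm{mlp}}(X)=Z^{(4)}W^{(4)}+X$, $Z^{(1)}=X$, $Z^{(j+1)}=\phi(Z^{(j)}W^{(j)})$ ($j=1,2,3$). Storage convention: scalars in the top row of a column (rest $0$), arrays of length $K-1$ in rows $2,\dots,K$ (top $0$); designated columns $B_{\mathrm{global}}$ (top $1$, rest $0$), $B_{\mathrm{local}}$ (top $0$, rest $1$), positional columns $P_1,P_2$ (array position $i$ holds $p_i^{(1)},p_i^{(2)}$), and scratchpad columns. ''Simulating an operation'' means the layer's weights can be chosen so that applying it to $X$ performs the stated update. *)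

(* Defs.v *)
From HB Require Import structures.
From mathcomp Require Import all_boot all_order all_algebra.
From mathcomp Require Import reals.
Set Implicit Arguments. Unset Strict Implicit. Unset Printing Implicit Defensive.
Import Order.TTheory GRing.Theory Num.Theory.
Local Open Scope ring_scope.

Section Transformer.
Variable R : realType.

Definition relu_mx (m n : nat) (Z : 'M[R]_(m, n)) : 'M[R]_(m, n) :=
  \matrix_(i, j) Num.max (Z i j) 0.

Definition argmax_set (K : nat) (Phi : 'M[R]_(K, K)) (i : 'I_K) : {set 'I_K} :=
  [set k | [forall j, Phi i j <= Phi i k]].

Definition hardmax (K : nat) (Phi : 'M[R]_(K, K)) : 'M[R]_(K, K) :=
  \matrix_(i, k) (if k \in argmax_set Phi i then (#|argmax_set Phi i|%:R)^-1 else 0).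

Record head (d : nat) := Head {
  WQ : 'M[R]_(d, 2); WK : 'M[R]_(d, 2); WV : 'M[R]_(d, d) }.

Definition psi (K d : nat) (h : head d) (X : 'M[R]_(K, d)) (B : 'M[R]_K)
  : 'M[R]_(K, d) :=
  B *m hardmax (X *m WQ h *m (WK h)^T *m X^T) *m X *m WV h.

Record layer (d : nat) := Layer {
  headsA : seq (head d); headsAT : seq (head d); headsI : seq (head d);
  h1 : nat; h2 : nat; h3 : nat;
  W1 : 'M[R]_(d, h1); W2 : 'M[R]_(h1, h2); W3 : 'M[R]_(h2, h3);
  W4 : 'M[R]_(h3, d) }.

Definition f_attn (K d : nat) (L : layer d) (X : 'M[R]_(K, d)) (At : 'M[R]_K)
  : 'M[R]_(K, d) :=
  \sum_(h <- headsA L) psi h X At + \sum_(h <- headsAT L) psi h X At^T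
  + \sum_(h <- headsI L) psi h X 1%:M + X.

Definition f_mlp (K d : nat) (L : layer d) (X : 'M[R]_(K, d)) : 'M[R]_(K, d) :=
  let Z2 := relu_mx (X *m W1 L) in
  let Z3 := relu_mx (Z2 *m W2 L) in
  let Z4 := relu_mx (Z3 *m W3 L) in
  Z4 *m W4 L + X.

Definition apply_layer (K d : nat) (L : layer d) (X : 'M[R]_(K, d)) (At : 'M[R]_K)
  : 'M[R]_(K, d) := f_mlp L (f_attn L X At).

(* Weighted hypergraph with n_v vertices, n_e hyperedges: incidence relation
   inc and edge weights w; A_{ij} = w(e_j) if v_i in e_j, else 0. *)
Definition incidence (nv ne : nat) (inc : 'I_nv -> 'I_ne -> bool) (w : 'I_ne -> R)
  : 'M[R]_(nv, ne) := \matrix_(i, j) (if inc i j then w j else 0).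

(* Padded incidence matrix (0-based indices): At[a,b] = A[a-1,b-1] for
   1 <= a <= n_v, 1 <= b <= n_e, and 0 elsewhere (i.e. row/col 1 in the
   paper's 1-based convention is all zeros). *)
Definition pad_incidence (K nv ne : nat) (A : 'M[R]_(nv, ne)) : 'M[R]_K :=
  \matrix_(a, b)
    (match insub (val a).-1, insub (val b).-1 with
     | Some i, Some j => if ((0 < val a) && (0 < val b))%N then A i j else 0
     | _, _ => 0
     end).

(* The entry X[1,C] (paper's 1-based row 1 = 0-based row 0); this is a
   sum over the single index k with val k = 0 (empty sum if K = 0). *)
Definition top_entry (K d : nat) (X : 'M[R]_(K, d)) (C : 'I_d) : R :=
  \sum_(k : 'I_K | val k == 0%N) X k C.

Definition stores_scalar (K d : nat) (X : 'M[R]_(K, d)) (C : 'I_d) : Prop :=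
  forall i : 'I_K, val i != 0%N -> X i C = 0.

Definition is_Bglobal (K d : nat) (X : 'M[R]_(K, d)) (c : 'I_d) : Prop :=
  forall i : 'I_K, X i c = (if val i == 0%N then 1 else 0).
Definition is_Blocal (K d : nat) (X : 'M[R]_(K, d)) (c : 'I_d) : Prop :=
  forall i : 'I_K, X i c = (if val i == 0%N then 0 else 1).

Definition repeat_add (K d : nat) (X : 'M[R]_(K, d)) (C D : 'I_d) : 'M[R]_(K, d) :=
  \matrix_(i, j) (if j == D then top_entry X C + X i j else X i j).

End Transformer.

(* Main.v *)
Require Import Defs.
From HB Require Import structures.
From mathcomp Require Import all_boot all_order all_algebra.
From mathcomp Require Import reals.
Import Order.TTheory GRing.Theory Num.Theory.
Local Open Scope ring_scope.

Theorem lemmaC10 (R : realType) (K d : nat) (Bg Bl C D : 'I_d) (Omega : R) :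
  0 < Omega -> Bg != Bl ->
  exists L : layer R d,
    forall (nv ne : nat) (inc : 'I_nv -> 'I_ne -> bool) (w : 'I_ne -> R)
           (X : 'M[R]_(K, d)),
      (maxn nv ne < K)%N ->
      (forall i j, `|X i j| <= Omega) ->
      is_Bglobal X Bg -> is_Blocal X Bl -> stores_scalar X C ->
      apply_layer L X (pad_incidence K (incidence inc w)) = repeat_add X C D.
Proof.
move=> _ nBgl.
pose hd := @Head R d (row_mx ((delta_mx Bg ord0 + delta_mx Bl ord0 : 'M_(d,1))) (0 : 'M_(d,1)))
  (row_mx (delta_mx Bg ord0 : 'M_(d,1)) (0 : 'M_(d,1))) (delta_mx C D).
exists (@Layer R d [::] [::] [:: hd] 0 0 0 0 0 0 0).
move=> nv ne inc w X hK _ hG hL _.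
case: K X hK hG hL => [|K] X hK hG hL; first by [].
rewrite /apply_layer /f_mlp /=.
have E0 : forall m (M : 'M[R]_(m,0)), M *m (0 : 'M[R]_(0,d)) = 0 by move=> m M; exact: mulmx0.
rewrite E0 add0r /f_attn !big_nil !big_cons big_nil.
rewrite !add0r addr0 /psi /= mul1mx.
have hPhi : X *m row_mx ((delta_mx Bg ord0 + delta_mx Bl ord0 : 'M_(d,1))) (0 : 'M_(d,1))
   *m (row_mx (delta_mx Bg ord0 : 'M_(d,1)) (0 : 'M_(d,1)))^T *m X^T
   = \matrix_(i, k) (if k == ord0 then 1 else 0).
  rewrite mul_mx_row mulmx0 tr_row_mx mul_row_col mul0mx addr0.
  rewrite -mulmxA -trmx_mul mulmxDr -!colE.
  apply/matrixP => i k; rewrite !mxE big_ord1 !mxE hG hL.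
  rewrite hG (_ : ((if \val i == 0%N then 1 else 0) + (if \val i == 0%N then 0 else 1)) = 1 :> R); last by case: ifP; rewrite ?addr0 ?add0r.
  by rewrite mul1r.
rewrite hPhi.
set M := \matrix_(_, _) _.
have hA : forall i, argmax_set M i = [set ord0].
  move=> i; apply/setP => k; rewrite !inE.
  apply/forallP/eqP.
    move=> /(_ ord0); rewrite !mxE eqxx.
    by case: (k =P ord0) => // _; rewrite ler10.
  move=> -> j; rewrite !mxE eqxx; case: ifP => _; [exact: lexx | exact: ler01].
have hH : hardmax M = \matrix_(i, k) (if k == ord0 then 1 else 0).
  by apply/matrixP => i k; rewrite !mxE hA cards1 invr1 inE.
rewrite hH; apply/matrixP => i j; rewrite !mxE.
rewrite (bigD1 C) //= big1 => [|l /negbTE hl]; last by rewrite !mxE hl mulr0.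
rewrite addr0 !mxE eqxx /=.
rewrite (bigD1 ord0) //= big1 => [|l /negbTE hl]; last by rewrite !mxE hl mul0r.
rewrite !mxE eqxx mul1r addr0 /top_entry (big_pred1 ord0) //.
by case: (j == D); rewrite ?mulr1 ?mulr0 ?add0r.
Qed.
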